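(* Let $q$ be a prime power, let $\mathcal{C} \subseteq \mathbb{F}_q^n$ be a linear code of dimension $k$, and let $d \ge 1$ be an integer. Then at least one of the following holds: (1) there exists a linear subcode $\mathcal{C}' \subseteq \mathcal{C}$ with $\mathrm{Density}(\mathcal{C}') > 1/d$; (2) for every integer $\alpha \ge 1$, the number of codewords $c \in \mathcal{C}$ with $\mathrm{wt}(c) \le \alpha d$ is at most $q^{\alpha} \binom{k}{\alpha}$.
   Context: $\mathrm{wt}(c)$ is the number of nonzero coordinates of $c$. For a linear code $\mathcal{D} \subseteq \mathbb{F}_q^n$, its support size is $\mathrm{Supp}(\mathcal{D}) = |\{ i \in [n] : \exists c \in \mathcal{D},\ c_i \neq 0\}|$, and its density is $\mathrm{Density}(\mathcal{D}) = \dim(\mathcal{D})/\mathrm{Supp}(\mathcal{D})$, with the density of the zero code defined to be $0$. A subcode is a linear subspace. $\binom{k}{\alpha} = 0$ if $\alpha > k$ is not relevant here: for $\alpha \ge k$ the bound is interpreted with the usual binomial coefficient. *)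

(* Defs.v *)
From HB Require Import structures.
From mathcomp Require Import all_boot all_order all_algebra all_field.
Set Implicit Arguments. Unset Strict Implicit. Unset Printing Implicit Defensive.
Import Order.TTheory GRing.Theory Num.Theory.

Definition wt (F : finFieldType) (n : nat) (c : 'rV[F]_n) : nat :=
  #|[set i : 'I_n | c ord0 i != 0%R]|.

Definition Supp (F : finFieldType) (n : nat) (D : {vspace 'rV[F]_n}) : nat :=
  #|[set i : 'I_n | [exists c : 'rV[F]_n, (c \in D) && (c ord0 i != 0%R)]]|.

Definition Density (F : finFieldType) (n : nat) (D : {vspace 'rV[F]_n}) : rat :=
  if D == 0%VS then 0%R else ((\dim D)%:R / (Supp D)%:R)%R.

(* Main.v *)
Require Import Defs.
From mathcomp Require Import all_boot all_order all_algebra all_field.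
From mathcomp Require Import zify.
From Stdlib Require Import Classical.
Import Order.TTheory GRing.Theory Num.Theory.

Section Key.
Variables (F : finFieldType) (n d : nat).
Local Open Scope ring_scope.

Definition SS (D : {vspace 'rV[F]_n}) : {set 'I_n} :=
  [set i : 'I_n | [exists c : 'rV[F]_n, (c \in D) && (c ord0 i != 0%R)]].
Definition Ls (D : {vspace 'rV[F]_n}) (t : nat) : {set 'rV[F]_n} :=
  [set c : 'rV[F]_n | (c \in D) && (wt c <= t)%N].
Definition fc (i : 'I_n) : 'Hom('rV[F]_n, 'M[F]_(1,1)) := linfun (@col F 1 n i).
Definition Hk i := lker (fc i).

Lemma memH c i : (c \in Hk i) = (c ord0 i == 0).
Proof.
rewrite /Hk memv_ker /fc lfunE /=.
apply/eqP/eqP => [h|h].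
  by have := congr1 (fun M : 'M[F]_(1,1) => M ord0 ord0) h; rewrite !mxE.
by apply/matrixP => a b; rewrite !ord1 !mxE h.
Qed.

Lemma dimDi D i : i \in SS D -> \dim (D :&: Hk i) = (\dim D).-1.
Proof.
rewrite inE => /existsP [c /andP [cD ci]].
have := limg_ker_dim (fc i) D; rewrite -/(Hk i).
suff -> : \dim (fc i @: D) = 1%N by move <-; rewrite addn1.
apply/eqP; rewrite eqn_leq; apply/andP; split.
  by have := dimvS (subvf (fc i @: D)); rewrite dimvf /dim /=.
rewrite lt0n dimv_eq0; apply/negP => /eqP h.
have : fc i c \in (fc i @: D)%VS by exact: memv_img.
rewrite h memv0 => h0.
have : c \in Hk i by rewrite /Hk memv_ker.
by rewrite memH (negbTE ci).
Qed.

Lemma card_cond (T : finType) (A : {set T}) (P : pred T) :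
  #|[set x in A | P x]| = (\sum_(x in A) (P x : nat))%N.
Proof.
rewrite -sum1_card big_mkcond [RHS]big_mkcond /=.
by apply: eq_bigr => x _; rewrite inE; case: (x \in A); case: (P x).
Qed.


Lemma key (dpos : (0 < d)%N) (k : nat) : forall D : {vspace 'rV[F]_n}, \dim D = k ->
  (forall V : {vspace 'rV[F]_n}, (V <= D)%VS -> (d * \dim V <= #|SS V|)%N) ->
  forall a, (1 <= a <= k)%N -> (#|Ls D (a * d)| <= #|F| ^ a * 'C(k, a))%N.
Proof.
elim: k => [|k IH] D dimD hyp a /andP [a1 ak].
  by move: a1; rewrite leqNgt (leq_ltn_trans ak).
have [aK|aK] := eqVneq a k.+1.
  rewrite aK binn muln1 -dimD -card_vspace.
  by apply: subset_leq_card; apply/subsetP => c; rewrite inE => /andP [].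
have ak' : (a <= k)%N by rewrite -ltnS ltn_neqAle aK ak.
set N := #|SS D|.
set L := #|Ls D (a * d)|.
set B := (#|F| ^ a * 'C(k, a))%N.
have hDi i : i \in SS D -> (#|Ls (D :&: Hk i) (a * d)| <= B)%N.
  move=> iS; apply: IH => //.
    by rewrite dimDi // dimD.
  by move=> V sV; apply: hyp; apply: subv_trans sV (capvSl _ _).
  by rewrite a1.
have eqLi i : Ls (D :&: Hk i) (a * d) = [set c in Ls D (a * d) | c ord0 i == 0].
  apply/setP => c; rewrite !inE memv_cap memH.
  by case: (c \in D); case: (c ord0 i == 0); rewrite ?andbT ?andbF.
have eqSc (c : 'rV[F]_n) : SS D :\: [set i | c ord0 i != 0] = [set i in SS D | c ord0 i == 0].
  by apply/setP => i; rewrite !inE negbK andbC.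
have dc : (\sum_(i in SS D) #|Ls (D :&: Hk i) (a * d)|
   = \sum_(c in Ls D (a * d)) #|SS D :\: [set i | c ord0 i != 0%R]|)%N.
  under eq_bigr => i _ do rewrite eqLi card_cond.
  rewrite exchange_big /=.
  by apply: eq_bigr => c _; rewrite eqSc card_cond.
have up : (\sum_(i in SS D) #|Ls (D :&: Hk i) (a * d)| <= N * B)%N.
  rewrite -sum_nat_const; exact: leq_sum.
have lo : (L * (N - a * d) <= \sum_(c in Ls D (a * d)) #|SS D :\: [set i | c ord0 i != 0%R]|)%N.
  rewrite /L -sum_nat_const; apply: leq_sum => c; rewrite inE => /andP [_ wc].
  have := cardsID [set i | c ord0 i != 0] (SS D).
  have : (#|SS D :&: [set i | c ord0 i != 0%R]| <= a * d)%N.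
    apply: leq_trans wc; apply: subset_leq_card; exact: subsetIr.
  rewrite -/N => h1 <-; by rewrite leq_subLR leq_add2r.
have NdK : (d * k.+1 <= N)%N by rewrite -dimD; apply: hyp; exact: subvv.
have bin : (k.+1 * 'C(k, a) = (k.+1 - a) * 'C(k.+1, a))%N by rewrite -mul_bin_down.
have H1 : (L * (N - a * d) <= N * B)%N by rewrite -dc in lo; exact: leq_trans lo up.
have Npos : (0 < N)%N.
  by apply: leq_trans NdK; rewrite muln_gt0 dpos.
have Ka : (0 < k.+1 - a)%N by rewrite subn_gt0.
rewrite -(leq_pmul2r Ka) -mulnA [('C(k.+1, a) * _)%N]mulnC -bin mulnCA -/B.
rewrite -(leq_pmul2l Npos).
have h3 : (N * (k.+1 - a) <= (N - a * d) * k.+1)%N.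
  clearbody N; clear -NdK ak; nia.
have := leq_mul (leqnn L) h3; have := leq_mul H1 (leqnn k.+1).
clearbody N L B; move=> h4 h5. nia.
Qed.
End Key.

Local Open Scope ring_scope.
Lemma nz_supp (F : finFieldType) (n : nat) (V : {vspace 'rV[F]_n}) :
  V != 0%VS -> (0 < Supp V)%N.
Proof.
move=> V0; rewrite /Supp card_gt0; apply/set0Pn.
have v0 : vpick V != 0 by rewrite vpick0.
have [i vi] : exists i, vpick V ord0 i != 0.
  apply/existsP; apply: contraR v0 => /existsPn h; apply/eqP/matrixP => a b.
  by rewrite ord1 mxE; apply/eqP; move: (h b); rewrite negbK.
by exists i; rewrite inE; apply/existsP; exists (vpick V); rewrite memv_pick.
Qed.

Local Close Scope ring_scope.
Theorem theorem2p2 (F : finFieldType) (n : nat) (C : {vspace 'rV[F]_n}) (d : nat) :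
  (0 < d)%N ->
  (exists C' : {vspace 'rV[F]_n}, (C' <= C)%VS /\ (1 / d%:R < Density C')%R)
  \/
  (forall alpha : nat, (1 <= alpha <= \dim C)%N ->
     (#|[set c : 'rV[F]_n | (c \in C) && (wt c <= alpha * d)%N]|
        <= #|F| ^ alpha * 'C(\dim C, alpha))%N).
Proof.
move=> dpos.
destruct (classic (exists C' : {vspace 'rV[F]_n}, (C' <= C)%VS /\ (1 / d%:R < Density C')%R)) as [h|h]; [by left|right].
move=> a ha; apply: (@key F n d dpos (\dim C) C erefl) => // V sV.
have [->|V0] := eqVneq V 0%VS; first by rewrite dimv0 muln0.
have Sp := @nz_supp _ _ V V0.
have : ~ (1 / d%:R < Density V)%R by move=> hlt; apply: h; exists V.
move/negP; rewrite -leNgt /Density (negbTE V0).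
rewrite ler_pdivrMr ?ltr0n // mul1r mulrC ler_pdivlMr ?ltr0n //.
by rewrite -natrM ler_nat mulnC.
Qed.
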